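(* Let $(R,\mathfrak{m})$ be a commutative Gorenstein henselian local ring. Let $M,N$ be finitely generated $R$-modules having no nonzero free direct summands, and let $f,g\colon M\to N$ be homomorphisms such that $g$ factors through a free $R$-module. Then: (1) $f$ is an isomorphism if and only if $f+g$ is an isomorphism; (2) $f$ is a split epimorphism if and only if $f+g$ is a split epimorphism; (3) $f$ is a split monomorphism if and only if $f+g$ is a split monomorphism; (4) $f$ is irreducible if and only if $f+g$ is irreducible.
   Context: A homomorphism $f\colon X\to Y$ of $R$-modules is irreducible if it is neither a split monomorphism nor a split epimorphism, and whenever $f=gh$ for homomorphisms $h\colon X\to Z$, $g\colon Z\to Y$ (with $Z$ a finitely generated $R$-module), either $g$ is a split epimorphism or $h$ is a split monomorphism. *)

(* Defs.v *)
From HB Require Import structures.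
From mathcomp Require Import all_boot all_order all_algebra.
Set Implicit Arguments. Unset Strict Implicit. Unset Printing Implicit Defensive.
Import GRing.Theory.
Local Open Scope ring_scope.

Section Defs.
Variable R : comUnitRingType.

Definition is_ideal (I : R -> Prop) : Prop :=
  [/\ I 0, (forall x y, I x -> I y -> I (x + y)) & (forall r x, I x -> I (r * x))].

Definition ideal_fg (I : R -> Prop) : Prop :=
  exists n (v : 'I_n -> R), forall x, I x <-> exists c : 'I_n -> R, x = \sum_(i < n) c i * v i.

Definition noetherian_ring : Prop := forall I, is_ideal I -> ideal_fg I.

Definition maximal_ideal (m : R -> Prop) : Prop :=
  [/\ is_ideal m, ~ m 1 &
      forall J, is_ideal J -> ~ J 1 -> (forall x, m x -> J x) -> forall x, J x -> m x].

Definition local_ring : Prop :=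
  exists m, maximal_ideal m /\ forall m', maximal_ideal m' -> forall x, m' x <-> m x.

(* henselian (Stacks 04GE): local, and simple roots mod m of monic polynomials lift *)
Definition henselian_local_ring : Prop :=
  local_ring /\
  forall m, maximal_ideal m ->
  forall (p : {poly R}) (a : R), p \is monic -> m p.[a] -> ~ m (p^`()).[a] ->
  exists b, p.[b] = 0 /\ m (b - a).

Definition fingen (M : lmodType R) : Prop :=
  exists n (v : 'I_n -> M), forall x : M, exists c : 'I_n -> R, x = \sum_(i < n) c i *: v i.

Definition free_module (F : lmodType R) : Prop :=
  exists (I : eqType) (b : I -> F),
    (forall x : F, exists (s : seq I) (c : I -> R), x = \sum_(i <- s) c i *: b i) /\
    (forall (s : seq I) (c : I -> R), uniq s -> \sum_(i <- s) c i *: b i = 0 ->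
        forall i, i \in s -> c i = 0).

Definition injective_module (E : lmodType R) : Prop :=
  forall (A B : lmodType R) (i : {linear A -> B}) (h : {linear A -> E}),
    injective i -> exists h' : {linear B -> E}, forall a, h' (i a) = h a.

(* R (as a module over itself) has injective dimension <= n: there is an exact
   sequence 0 -> R -> I_0 -> I_1 -> ... -> I_n -> 0 with all I_j injective
   (encoded with I_(n+1) = 0, exactness at R, I_0, ..., I_n) *)
Definition injdim_R_le (n : nat) : Prop :=
  exists (I : nat -> lmodType R) (e : {linear R^o -> I 0%N})
         (d : forall j, {linear I j -> I j.+1}),
    [/\ forall j, (j <= n)%N -> injective_module (I j),
        injective e,
        forall y, d 0%N y = 0 <-> exists x, e x = y,
        forall j y, (j.+1 <= n)%N -> (d j.+1 y = 0 <-> exists x, d j x = y) &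
        forall y : I n.+1, y = 0].

Definition gorenstein_local_ring : Prop :=
  [/\ noetherian_ring, local_ring & exists n, injdim_R_le n].

End Defs.

Section Maps.
Variable R : comUnitRingType.

Definition is_iso (M N : lmodType R) (f : M -> N) : Prop := bijective f.

Definition split_epi (M N : lmodType R) (f : M -> N) : Prop :=
  exists s : {linear N -> M}, forall y, f (s y) = y.

Definition split_mono (M N : lmodType R) (f : M -> N) : Prop :=
  exists p : {linear N -> M}, forall x, p (f x) = x.

Definition irreducible_hom (X Y : lmodType R) (f : X -> Y) : Prop :=
  ~ split_mono f /\ ~ split_epi f /\
  forall (Z : lmodType R) (h : {linear X -> Z}) (g : {linear Z -> Y}),
    fingen Z -> (forall x, f x = g (h x)) -> split_epi g \/ split_mono h.

Definition direct_summand (F M : lmodType R) : Prop :=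
  exists (i : {linear F -> M}) (p : {linear M -> F}), forall x, p (i x) = x.

Definition no_free_summand (M : lmodType R) : Prop :=
  forall F : lmodType R, free_module F -> direct_summand F M ->
    forall x : F, x = 0.

Definition factors_through_free (M N : lmodType R) (g : M -> N) : Prop :=
  exists (F : lmodType R) (h : {linear M -> F}) (k : {linear F -> N}),
    free_module F /\ forall x, g x = k (h x).

End Maps.

(* Main.v *)
From HB Require Import structures.
From mathcomp Require Import ring.
From mathcomp Require Import all_boot all_order all_algebra all_fingroup.
From mathcomp Require classical_sets.
Require Import Defs.
From Stdlib Require Import Classical ClassicalEpsilon.
Set Implicit Arguments.
Import GRing.Theory.
Local Open Scope ring_scope.

Section MkLin.
Variables (R : comUnitRingType) (U V : lmodType R).
Definition mkLin (f : U -> V) (hf : linear f) : U -> V := f.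
Variables (f : U -> V) (hf : linear f).
HB.instance Definition _ := GRing.isLinear.Build R U V *:%R (@mkLin f hf) hf.
End MkLin.
Arguments mkLin {R U V} f hf.

Section Coord.
Variables (R : comUnitRingType) (F : lmodType R) (I : eqType) (b : I -> F).
Hypothesis hspan : forall x : F, exists (s : seq I) (c : I -> R), x = \sum_(i <- s) c i *: b i.
Hypothesis hind : forall (s : seq I) (c : I -> R), uniq s -> \sum_(i <- s) c i *: b i = 0 ->
        forall i, i \in s -> c i = 0.

Definition rep (L : seq (I * R)) : F := \sum_(p <- L) p.2 *: b p.1.
Definition coefL (L : seq (I * R)) t : R := \sum_(p <- L | p.1 == t) p.2.

Lemma sum_pred1_seq (S : seq I) (G : I -> F) i : uniq S -> i \in S ->
  \sum_(t <- S | t == i) G t = G i.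
Proof. by move=> uS iS; rewrite -big_filter filter_pred1_uniq // big_seq1. Qed.

Lemma expand (S : seq I) L : uniq S -> {subset map fst L <= S} ->
  \sum_(t <- S) coefL L t *: b t = rep L.
Proof.
move=> uS sub; under eq_bigr => t _ do rewrite /coefL scaler_suml.
rewrite (exchange_big_dep xpredT) //= /rep; apply: eq_big_seq => p pL.
rewrite (eq_bigl (fun t => t == p.1)); last by move=> t /=; rewrite eq_sym.
by rewrite sum_pred1_seq //; apply: sub; apply: map_f.
Qed.

Lemma rep0 L t : rep L = 0 -> coefL L t = 0.
Proof.
move=> h; have sub : {subset map fst L <= undup (map fst L)} by move=> x; rewrite mem_undup.
have e := @expand (undup (map fst L)) L (undup_uniq _) sub.
rewrite h in e.
case: (boolP (t \in undup (map fst L))) => tS.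
  exact: hind (undup_uniq _) e _ tS.
rewrite /coefL big1_seq // => p /andP [/eqP pt pL]; exfalso; move/negP: tS; apply.
by rewrite mem_undup -pt; apply: map_f.
Qed.

Lemma repEx x : exists L, rep L = x.
Proof.
have [s [c ->]] := hspan x; exists (map (fun i => (i, c i)) s).
by rewrite /rep big_map.
Qed.

Definition repOf x := proj1_sig (constructive_indefinite_description _ (repEx x)).
Lemma repOfK x : rep (repOf x) = x.
Proof. exact: proj2_sig (constructive_indefinite_description _ (repEx x)). Qed.

Definition coord t x := coefL (repOf x) t.

Definition lcomb a (L L' : seq (I * R)) := map (fun p => (p.1, a * p.2)) L ++ L'.

Lemma rep_lcomb a L L' : rep (lcomb a L L') = a *: rep L + rep L'.
Proof.
rewrite /rep /lcomb big_cat big_map /= scaler_sumr; congr (_ + _).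
by apply: eq_bigr => p _; rewrite scalerA.
Qed.

Lemma coefL_lcomb a L L' t : coefL (lcomb a L L') t = a * coefL L t + coefL L' t.
Proof.
rewrite /coefL /lcomb big_cat big_map /= mulr_sumr; congr (_ + _).
Qed.

Lemma coord_rep L t : coord t (rep L) = coefL L t.
Proof.
have h : rep (lcomb (-1) L (repOf (rep L))) = 0.
  by rewrite rep_lcomb repOfK scaleN1r addNr.
have := rep0 t h; rewrite coefL_lcomb mulN1r /coord => /eqP.
by rewrite addrC subr_eq0 => /eqP.
Qed.

Lemma coord_lin t : linear (coord t : F -> R^o).
Proof.
move=> a x y; rewrite -[x]repOfK -[y]repOfK -rep_lcomb coord_rep coefL_lcomb.
by rewrite !coord_rep.
Qed.

Definition coordL t : {linear F -> R^o} := mkLin _ (coord_lin t).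
Lemma coordLE t x : coordL t x = coord t x. Proof. by []. Qed.

Lemma coord_expand (S : seq I) L : uniq S -> {subset map fst L <= S} ->
  \sum_(t <- S) coordL t (rep L) *: b t = rep L.
Proof.
move=> uS sub; rewrite -[RHS](@expand S L) //; apply: eq_bigr => t _.
by rewrite coordLE coord_rep.
Qed.

End Coord.

Section GF.
Variables (R : comUnitRingType) (M N F : lmodType R).
Hypothesis hM : fingen M.
Hypothesis hF : free_module F.
Variables (h : {linear M -> F}) (k : {linear F -> N}).

Lemma good_fact : exists n (h' : {linear M -> 'rV[R]_n}) (k' : {linear 'rV[R]_n -> N}),
  forall x, k (h x) = k' (h' x).
Proof.
have [I [b [hspan hind]]] := hF.
have [p [v hv]] := hM.
pose rOf := repOf I b hspan. pose cL := coordL I b hspan hind.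
pose S := undup (flatten [seq map fst (rOf (h (v i))) | i <- enum 'I_p]).
have uS : uniq S by apply: undup_uniq.
pose P z := \sum_(t <- S) cL t z *: b t = z.
have P0 : P 0 by rewrite /P big1 // => t _; rewrite raddf0 scale0r.
have PD z w : P z -> P w -> P (z + w).
  by rewrite /P => Pz Pw; rewrite -[in RHS]Pz -[in RHS]Pw -big_split; apply: eq_bigr => t _; rewrite raddfD scalerDl.
have PZ a z : P z -> P (a *: z).
  rewrite /P => Pz; rewrite -[in RHS]Pz scaler_sumr; apply: eq_bigr => t _.
  by rewrite linearZ scalerA.
have Pv i : P (h (v i)).
  rewrite /P -{2}(repOfK I b hspan (h (v i))) -{1}(repOfK I b hspan (h (v i))).
  apply: (coord_expand b hspan hind) => // t tL; rewrite mem_undup; apply/flattenP.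
  by exists (map fst (rOf (h (v i)))) => //; apply: map_f; rewrite mem_enum.
have E x : P (h x).
  have [c ->] := hv x; rewrite linear_sum.
  by elim/big_ind: _ => // i _; rewrite linearZ; apply: PZ.
pose T := in_tuple S.
have lh : linear (fun x => \row_(j < size S) cL (tnth T j) (h x)).
  by move=> a x y; apply/rowP => j; rewrite !mxE !linearP.
have lk : linear (fun r : 'rV[R]_(size S) => \sum_j r 0 j *: k (b (tnth T j))).
  move=> a r s; rewrite scaler_sumr -big_split; apply: eq_bigr => j _.
  by rewrite !mxE scalerDl scalerA.
exists (size S), (mkLin _ lh), (mkLin _ lk) => x.
rewrite -{1}(E x) /P big_tnth linear_sum /=; apply: eq_bigr => j _.
by rewrite linearZ /= mxE.
Qed.

End GF.

Section Local.
Variable R : comUnitRingType.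
Variable m : R -> Prop.
Hypothesis mmax : maximal_ideal m.
Hypothesis muniq : forall m', maximal_ideal m' -> forall x, m' x <-> m x.

Lemma mid : is_ideal m. Proof. by case: mmax. Qed.
Lemma m0 : m 0. Proof. by case: mid. Qed.
Lemma mD x y : m x -> m y -> m (x + y). Proof. by case: mid => _ H _; apply: H. Qed.
Lemma mMl r x : m x -> m (r * x). Proof. by case: mid => _ _ H; apply: H. Qed.
Lemma mMr r x : m x -> m (x * r). Proof. by rewrite mulrC; apply: mMl. Qed.
Lemma mN x : m x -> m (- x). Proof. by move=> h; rewrite -mulN1r; apply: mMl. Qed.
Lemma mB x y : m x -> m y -> m (x - y). Proof. by move=> hx hy; apply: mD => //; apply: mN. Qed.
Lemma m1 : ~ m 1. Proof. by case: mmax. Qed.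

Lemma m_sum (I : Type) (s : seq I) (P : pred I) (F : I -> R) :
  (forall i, P i -> m (F i)) -> m (\sum_(i <- s | P i) F i).
Proof.
move=> h; elim/big_ind: _ => //; [exact: m0 | exact: mD].
Qed.

Lemma m_notunit x : m x -> x \isn't a GRing.unit.
Proof.
move=> hx; apply/negP => ux; apply: m1.
by rewrite -(mulVr ux); apply: mMl.
Qed.

Lemma notunit_m x : x \isn't a GRing.unit -> m x.
Proof.
move=> nux.
pose P (A : R -> Prop) := (forall t, ~ A t) \/ [/\ is_ideal A, ~ A 1 & A x].
have [A [PA Amax]] : exists A, P A /\ forall B, classical_sets.proper A B -> ~ P B.
  apply: classical_sets.Zorn_bigcup => F FP Ftot.
  case: (classic (exists X, F X /\ exists t, X t)) => [[X0 [FX0 [t0 X0t0]]]|nX]; last first.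
    by left => t [X FX Xt]; apply: nX; exists X; split => //; exists t.
  have idF : forall W, F W -> (exists t, W t) -> [/\ is_ideal W, ~ W 1 & W x].
    move=> W FW [t Wt]; case: (FP W FW) => // h; by case: (h t).
  have [[X00 X0D X0M] X01 X0x] := idF X0 FX0 (ex_intro _ t0 X0t0).
  right; split.
  - split.
    + by exists X0.
    + move=> a b [X FX Xa] [Y FY Yb].
      have [[? XD ?] _ _] := idF X FX (ex_intro _ a Xa).
      have [[? YD ?] _ _] := idF Y FY (ex_intro _ b Yb).
      case: (Ftot X Y FX FY) => sub.
      * by exists Y => //; apply: YD => //; apply: sub.
      * by exists X => //; apply: XD => //; apply: sub.
    + move=> r a [X FX Xa]; have [[? ? XM] _ _] := idF X FX (ex_intro _ a Xa).
      by exists X => //; apply: XM.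
  - move=> [X FX X1]; have [_ h _] := idF X FX (ex_intro _ 1 X1); exact: h X1.
  - by exists X0.
have PA' : [/\ is_ideal A, ~ A 1 & A x].
  case: PA => // h; exfalso.
  apply: (Amax (fun t => exists r, t = r * x)).
  - split; first by move=> t /h.
    move=> H; apply: (h 0); apply: H; by exists 0; rewrite mul0r.
  - right; split.
    + split; first by exists 0; rewrite mul0r.
      * by move=> a b [r ->] [s ->]; exists (r + s); rewrite mulrDl.
      * by move=> r a [s ->]; exists (r * s); rewrite mulrA.
    + move=> [r /esym e]; move/negP: nux; apply; apply/unitrP; exists r.
      by split => //; rewrite mulrC.
    + by exists 1; rewrite mul1r.
case: PA' => Aid A1 Ax.
have Am : maximal_ideal A.
  split => // J Jid J1 AJ t Jt.
  apply: NNPP => nAt; apply: (Amax J).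
  - split => //; move=> H; exact: nAt (H t Jt).
  - right; split => //; exact: AJ.
by apply (muniq Am x).
Qed.

Lemma unit_notm x : ~ m x -> x \is a GRing.unit.
Proof. by move=> h; case: (boolP (x \is a GRing.unit)) => // /notunit_m. Qed.

Lemma unit_1m a : m a -> (1 + a) \is a GRing.unit.
Proof.
move=> ha; apply: unit_notm => h; apply: m1.
by have := mB h ha; rewrite addrK.
Qed.

Lemma freeRo : free_module (R^o).
Proof.
exists unit, (fun _ => (1 : R^o)); split.
  by move=> x; exists [:: tt], (fun _ => x); rewrite big_seq1 /= [_ *: _]mulr1.
move=> s c us; case: s us => [|[] [|[] s]] //= us.
  rewrite big_seq1 => h [] _; move: h; rewrite /GRing.scale /= mulr1 //.

Qed.

Lemma T1 (X : lmodType R) (hX : no_free_summand X) (phi : {linear X -> R^o}) x :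
  m (phi x).
Proof.
apply: NNPP => h; have u := unit_notm h.
pose c := phi x.
have li : linear (fun r : R^o => (r * c^-1) *: x).
  by move=> a r s /=; rewrite mulrDl scalerDl scalerA mulrA.
have : (1 : R^o) = 0.
  apply: (hX _ freeRo); exists (mkLin _ li), phi => r /=.
  rewrite /mkLin linearZ /=; exact: divrK.
by apply/eqP; rewrite oner_eq0.
Qed.

Lemma fingenS (X : lmodType R) : fingen X ->
  exists p (v : 'I_p.+1 -> X), forall x, exists c : 'I_p.+1 -> R, x = \sum_i c i *: v i.
Proof.
move=> [p [v0 hv0]].
exists p, (fun i => if unlift ord0 i is Some j then v0 j else 0) => x.
have [c ->] := hv0 x.
exists (fun i => if unlift ord0 i is Some j then c j else 0).
rewrite big_ord_recl unlift_none scale0r add0r; apply: eq_bigr => i _.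
by rewrite liftK.
Qed.

Lemma det_unit p (A : 'M[R]_p) : (forall i j, m (A i j)) -> \det (1%:M + A) \is a GRing.unit.
Proof.
move=> hA.
suff h : m (\det (1%:M + A) - 1).
  by have := unit_1m h; rewrite addrC subrK.
rewrite /determinant (bigD1 1%g) //= odd_perm1 expr0 mul1r addrAC.
apply: mD.
  pose Q x := m (x - 1).
  rewrite -/(Q _); apply: big_ind.
  - by rewrite /Q subrr; exact: m0.
  - move=> x y hx hy; rewrite /Q.
    have -> : x * y - 1 = (x - 1) * y + (y - 1) by ring.
    by apply: mD => //; apply: mMr.
  - by move=> i _; rewrite /Q perm1 !mxE eqxx mulr1n addrAC subrr add0r.
apply: m_sum => s hs; apply: mMl.
have [i hi] : exists i, s i != i.
  apply: NNPP => h; move/negP: hs; apply; apply/eqP/permP => i; rewrite perm1.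
  apply/eqP; apply: NNPP => h'; apply: h; exists i; exact/negP.
rewrite (bigD1 i) //=; apply: mMr; rewrite !mxE eq_sym (negbTE hi) mulr0n add0r.
exact: hA.
Qed.

Lemma keyK (X : lmodType R) (hX : fingen X) n (phi : {linear X -> 'rV[R]_n})
  (k : {linear 'rV[R]_n -> X}) : (forall x j, m (phi x 0 j)) ->
  exists w : {linear X -> X}, forall x, w (x + k (phi x)) = x /\ w x + k (phi (w x)) = x.
Proof.
move=> hphi.
have [p [v hv]] := fingenS hX.
pose E l := proj1_sig (constructive_indefinite_description _ (hv (k (delta_mx 0 l)))).
have hE l : k (delta_mx 0 l) = \sum_j E l j *: v j.
  exact: proj2_sig (constructive_indefinite_description _ (hv (k (delta_mx 0 l)))).
pose A : 'M[R]_p.+1 := \matrix_(i, j) \sum_l phi (v i) 0 l * E l j.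
have hA i j : m (A i j) by rewrite mxE; apply: m_sum => l _; apply: mMr.
pose vm x := x + k (phi x).
have uv i : k (phi (v i)) = \sum_j A i j *: v j.
  rewrite {1}(row_sum_delta (phi (v i))) linear_sum.
  under eq_bigr => l _ do rewrite linearZ_LR hE scaler_sumr.
  rewrite exchange_big; apply: eq_bigr => j _; rewrite mxE scaler_suml.
  by apply: eq_bigr => l _; rewrite scalerA.
pose Phi (c : 'rV[R]_p.+1) := \sum_i c 0 i *: v i.
have PhiD c d : Phi (c + d) = Phi c + Phi d.
  by rewrite /Phi -big_split; apply: eq_bigr => i _; rewrite mxE scalerDl.
have PhiZ a c : Phi (a *: c) = a *: Phi c.
  by rewrite /Phi scaler_sumr; apply: eq_bigr => i _; rewrite mxE scalerA.
have Phi0 : Phi 0 = 0 by rewrite /Phi big1 // => i _; rewrite mxE scale0r.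
have PhiA c : Phi (c *m A) = k (phi (Phi c)).
  rewrite /Phi !linear_sum /=.
  under [RHS]eq_bigr => i _ do rewrite !linearZ_LR uv scaler_sumr.
  rewrite [RHS]exchange_big; apply: eq_bigr => j _; rewrite !mxE scaler_suml.
  by apply: eq_bigr => i _; rewrite scalerA.
pose B : 'M[R]_p.+1 := 1%:M + A.
have PhiB c : Phi (c *m B) = vm (Phi c) by rewrite /B mulmxDr mulmx1 PhiD PhiA.
have PhiBk i c : Phi (c *m B ^+ i) = iter i vm (Phi c).
  elim: i c => [|i IH] c; first by rewrite expr0 mulmx1.
  have -> : c *m B ^+ i.+1 = (c *m B ^+ i) *m B by rewrite exprSr; exact: mulmxA.
  by rewrite PhiB IH.
pose P := char_poly B.
have CH : \sum_(i < size P) P`_i *: B ^+ i = 0.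
  transitivity (horner_mx B P); last exact: Cayley_Hamilton.
  have -> : horner_mx B P = horner_mx B (\poly_(i < size P) P`_i) by rewrite coefK.
  rewrite poly_def linear_sum /=; apply: eq_bigr => i _.
  by rewrite linearZ_LR /= rmorphXn /= horner_mx_X.
have hP x : \sum_(i < size P) P`_i *: iter i vm x = 0.
  have [c ->] := hv x; pose c' := \row_i c i.
  have -> : \sum_i c i *: v i = Phi c' by rewrite /Phi; apply: eq_bigr => i _; rewrite mxE.
  transitivity (Phi (c' *m \sum_(i < size P) P`_i *: B ^+ i)); last by rewrite CH mulmx0 Phi0.
  rewrite mulmx_sumr (big_morph Phi PhiD Phi0); apply: eq_bigr => i _.
  by rewrite -scalemxAr PhiZ PhiBk.
have vmZ a x : vm (a *: x) = a *: vm x by rewrite /vm !linearZ_LR scalerDr.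
have vm0 : vm 0 = 0 by rewrite /vm !raddf0 addr0.
have vmD x y : vm (x + y) = vm x + vm y by rewrite /vm !raddfD addrACA.
have vmL : linear vm by move=> a x y; rewrite vmD vmZ.
have iterL i : linear (iter i vm).
  by elim: i => [|i IH] a x y //=; rewrite IH vmL.
pose c0 := P`_0.
have c0u : c0 \is a GRing.unit.
  rewrite /c0 /P char_poly_det unitrM unitrX ?unitrN1 //=; exact: det_unit.
have hS x : \sum_(i < size P) P`_i.+1 *: iter i.+1 vm x = - (c0 *: x).
  have e : \sum_(i < (size P).+1) P`_i *: iter i vm x = 0.
    by rewrite big_ord_recr /= nth_default // scale0r addr0; exact: hP.
  move: e; rewrite big_ord_recl /= => /eqP; rewrite addrC addr_eq0 => /eqP <-.
  by apply: eq_bigr => i _.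
pose w x := - c0^-1 *: \sum_(i < size P) P`_i.+1 *: iter i vm x.
have wL : linear w.
  move=> a x y; rewrite /w; under eq_bigr => i _ do rewrite iterL scalerDr.
  rewrite big_split scalerDr /=; congr (_ + _).
  rewrite !scaler_sumr; apply: eq_bigr => i _; rewrite !scalerA; congr (_ *: _).
  by rewrite mulrC mulrA.
exists (mkLin w wL) => x; split.
  rewrite /= /mkLin /w -/(vm x).
  under eq_bigr => i _ do rewrite -iterSr.
  by rewrite hS scaleNr scalerN opprK scalerA mulVr // scale1r.
rewrite -/(vm _) /= /mkLin /w vmZ (big_morph vm vmD vm0).
under eq_bigr => i _ do rewrite vmZ.
by rewrite hS scaleNr scalerN opprK scalerA mulVr // scale1r.
Qed.


Lemma T1row (X : lmodType R) (hX : no_free_summand X) n (psi : {linear X -> 'rV[R]_n}) x j :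
  m (psi x 0 j).
Proof.
have l : linear (fun x => psi x 0 j : R^o) by move=> a u v; rewrite linearP !mxE.
exact: (T1 hX (mkLin _ l) x).
Qed.

Lemma fingen_prod (Z : lmodType R) n : fingen Z -> fingen (Z * 'rV[R]_n)%type.
Proof.
move=> [p [v hv]].
exists (p + n)%N, (fun i => match split i with inl a => (v a, 0) | inr b => (0, delta_mx 0 b) end).
move=> [z r]; have [c hc] := hv z.
exists (fun i => match split i with inl a => c a | inr b => r 0 b end).
have sl i : split (lshift n i) = inl i := unsplitK (inl i).
have sr i : split (rshift p i) = inr i := unsplitK (inr i).
have fstS (I : Type) (s : seq I) (F : I -> (Z * 'rV[R]_n)%type) :
  (\sum_(i <- s) F i).1 = \sum_(i <- s) (F i).1.
  by elim: s => [|a s IH]; rewrite ?big_nil ?big_cons //= IH.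
have sndS (I : Type) (s : seq I) (F : I -> (Z * 'rV[R]_n)%type) :
  (\sum_(i <- s) F i).2 = \sum_(i <- s) (F i).2.
  by elim: s => [|a s IH]; rewrite ?big_nil ?big_cons //= IH.
rewrite big_split_ord [RHS]surjective_pairing /=.
congr (_, _).
  rewrite fstS fstS hc -[LHS]addr0; congr (_ + _).
    by apply: eq_bigr => i _; rewrite sl.
  by rewrite big1 // => i _; rewrite sr /= scaler0.
rewrite sndS sndS {1}(row_sum_delta r) -[LHS]add0r; congr (_ + _).
  by rewrite big1 // => i _; rewrite sl /= scaler0.
by apply: eq_bigr => i _; rewrite sr.
Qed.

Section Maps.
Variables (M N : lmodType R).
Hypotheses (hM : fingen M) (hN : fingen N) (hM0 : no_free_summand M) (hN0 : no_free_summand N).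

Definition Good (g : M -> N) := exists n (h' : {linear M -> 'rV[R]_n}) (k' : {linear 'rV[R]_n -> N}),
  forall x, g x = k' (h' x).

Lemma GoodN g : Good g -> Good (fun x => - g x).
Proof.
move=> [n [h' [k' hg]]].
have l : linear (fun x => - h' x) by move=> a x y; rewrite linearP opprD scalerN.
by exists n, (mkLin _ l), k' => x; rewrite /= /mkLin raddfN hg.
Qed.

Lemma split_epi_ext (f1 f2 : M -> N) : (forall x, f1 x = f2 x) -> split_epi f1 -> split_epi f2.
Proof. by move=> e [s hs]; exists s => y; rewrite -e. Qed.
Lemma split_mono_ext (f1 f2 : M -> N) : (forall x, f1 x = f2 x) -> split_mono f1 -> split_mono f2.
Proof. by move=> e [s hs]; exists s => y; rewrite -e. Qed.

Lemma SE (f g : M -> N) : Good g -> split_epi f -> split_epi (fun x => f x + g x).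
Proof.
move=> [n [h' [k' hg]]] [s hs].
have [w hw] := keyK hN (h' \o s) k' (fun y j => T1row hM0 h' (s y) j).
by exists (s \o w) => y /=; rewrite hs hg; exact: (hw y).2.
Qed.

Lemma SM (f g : M -> N) : Good g -> split_mono f -> split_mono (fun x => f x + g x).
Proof.
move=> [n [h' [k' hg]]] [p hp].
have [w hw] := keyK hM h' (p \o k') (T1row hM0 h').
by exists (w \o p) => x /=; rewrite linearD hp hg; exact: (hw x).1.
Qed.

Lemma SEc (f g : M -> N) : Good g -> split_epi (fun x => f x + g x) -> split_epi f.
Proof.
move=> Gg h; apply: (@split_epi_ext (fun x => f x + g x + - g x)); last exact: SE (GoodN Gg) h.
by move=> x; rewrite addrK.
Qed.

Lemma SMc (f g : M -> N) : Good g -> split_mono (fun x => f x + g x) -> split_mono f.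
Proof.
move=> Gg h; apply: (@split_mono_ext (fun x => f x + g x + - g x)); last exact: SM (GoodN Gg) h.
by move=> x; rewrite addrK.
Qed.

Lemma iso_split (f : M -> N) : linear f -> (is_iso f <-> split_epi f /\ split_mono f).
Proof.
move=> fL; split.
  move=> [fi K1 K2].
  have l : linear fi.
    by move=> a x y; apply: (can_inj K1); rewrite K2 fL !K2.
  by split; exists (mkLin _ l).
move=> [[s hs] [p hp]]; exists s => // x.
have e y : p y = s y by rewrite -{1}(hs y) hp.
by rewrite -e hp.
Qed.

Lemma IRR (f g : M -> N) : Good g -> irreducible_hom f -> irreducible_hom (fun x => f x + g x).
Proof.
move=> Gg [nm [ne fac]].
split; first by move/(@SMc f g Gg).
split; first by move/(@SEc f g Gg).
have [n [h' [k' hg]]] := Gg.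
move=> Z al be hZ hfac.
have alL : linear (fun x => (al x, h' x) : (Z * 'rV[R]_n)%type).
  by move=> a x y; rewrite !linearP.
have beL : linear (fun zr : (Z * 'rV[R]_n)%type => be zr.1 - k' zr.2).
  move=> a [z1 r1] [z2 r2] /=; by rewrite (linearP be) (linearP k') opprD scalerBr addrACA.
have hf x : f x = mkLin _ beL (mkLin _ alL x).
  by rewrite /= /mkLin /= -hfac hg addrK.
case: (fac _ (mkLin _ alL) (mkLin _ beL) (fingen_prod n hZ) hf) => [[s hs] | [p hp]].
  left.
  have s2L : linear (fun y => (s y).2) by move=> a x y; rewrite linearP.
  have [w hw] := keyK hN (mkLin _ s2L) k' (T1row hN0 (mkLin _ s2L)).
  have secL : linear (fun y => (s (w y)).1) by move=> a x y; rewrite !linearP.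
  exists (mkLin _ secL) => y /=; rewrite /mkLin.
  have := hs (w y); rewrite /= /mkLin => /eqP; rewrite subr_eq => /eqP ->.
  exact: (hw y).2.
right.
have qL : linear (fun r => p (0, r)).
  move=> a x y; rewrite -linearP; congr (p _); rewrite /=.
  by apply: injective_projections => /=; rewrite ?scaler0 ?addr0.
have nL : linear (fun x => - h' x) by move=> a x y; rewrite linearP opprD scalerN.
have [w hw] := keyK hM (mkLin _ nL) (mkLin _ qL) (T1row hM0 (mkLin _ nL)).
have rL : linear (fun z => w (p (z, 0))).
  move=> a x y; rewrite -!linearP; congr (w (p _)).
  by apply: injective_projections => /=; rewrite ?scaler0 ?addr0.
exists (mkLin _ rL) => x /=; rewrite /mkLin.
have e : p (al x, 0) = x + p (0, - h' x).
  have := hp x; rewrite /= /mkLin => hx.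
  have -> : (0, - h' x) = - ((0, h' x) : (Z * 'rV[R]_n)%type).
    by apply: injective_projections => /=; rewrite ?oppr0.
  rewrite raddfN -{2}hx -raddfB; congr (p _).
  by apply: injective_projections => /=; rewrite ?subr0 ?subrr.
rewrite e; exact: (hw x).1.
Qed.

Lemma irr_ext (f1 f2 : M -> N) : (forall x, f1 x = f2 x) -> irreducible_hom f1 -> irreducible_hom f2.
Proof.
move=> e [nm [ne fac]]; split.
  by move=> h; apply: nm; apply: (@split_mono_ext f2 f1 _ h) => x; rewrite e.
split.
  by move=> h; apply: ne; apply: (@split_epi_ext f2 f1 _ h) => x; rewrite e.
move=> Z h g hZ hf; apply: fac => // x; rewrite e; exact: hf.
Qed.

End Maps.

End Local.

Unset Implicit Arguments.

Theorem lemma2p3 (R : comUnitRingType)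
  (hG : gorenstein_local_ring R) (hH : henselian_local_ring R)
  (M N : lmodType R) (hM : fingen M) (hN : fingen N)
  (hM0 : no_free_summand M) (hN0 : no_free_summand N)
  (f g : {linear M -> N}) (hg : factors_through_free g) :
  let fg := fun x => f x + g x in
  [/\ is_iso f <-> is_iso fg,
      split_epi f <-> split_epi fg,
      split_mono f <-> split_mono fg &
      irreducible_hom f <-> irreducible_hom fg].
Proof.
move=> fg.
have [[m [mmax muniq]] _] := hH.
have [F [h [k [hF hgk]]]] := hg.
have [n [h' [k' e]]] := good_fact hM hF h k.
have Gg : Good M N g by exists n, h', k' => x; rewrite hgk e.
have GgN : Good M N (fun x => - g x) := GoodN Gg.
have E2 : split_epi f <-> split_epi fg.
  split=> H; [exact (SE mmax muniq hN hM0 Gg H) | exact (SEc mmax muniq hN hM0 f Gg H)].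
have E3 : split_mono f <-> split_mono fg.
  split=> H; [exact (SM mmax muniq hM hM0 Gg H) | exact (SMc mmax muniq hM hM0 f Gg H)].
have fL : linear f by move=> a x y; rewrite linearP.
have fgL : linear fg by move=> a x y; rewrite /fg !linearP scalerDr addrACA.
split => //.
  split=> H.
    have [H1 H2] := (iso_split fL).1 H; apply: (iso_split fgL).2.
    by split; [exact: E2.1 H1 | exact: E3.1 H2].
  have [H1 H2] := (iso_split fgL).1 H; apply: (iso_split fL).2.
  by split; [exact: E2.2 H1 | exact: E3.2 H2].
split=> H; first exact (IRR mmax muniq hM hN hM0 hN0 Gg H).
have := IRR mmax muniq hM hN hM0 hN0 GgN H.
by apply: irr_ext => x; rewrite /fg addrK.
Qed.
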